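(* Consider a single-hop switched network with $N$ queues and arrival rate vector $\lambda\in\Lambda$. (i) Every fluid model solution for the MW-$\alpha$ policy ($\alpha>0$) satisfies $\mathbf 1\cdot q(t)\le N^{\alpha/(1+\alpha)}\,\mathbf 1\cdot q(0)$ for all $t\ge0$. (ii) If $\lambda$ satisfies the complete loading condition, then every fluid model solution for any scheduling policy satisfies $\mathbf 1\cdot q(t)\ge\mathbf 1\cdot q(0)$ for all $t\ge0$.
   Context: Single-hop network: finite $\mathcal S\subset\mathbb R_+^N$. $\langle\mathcal S\rangle$ convex hull; $\Lambda=\{\lambda\in\mathbb R_+^N:\lambda\le\sigma$ for some $\sigma\in\langle\mathcal S\rangle\}$. $E$ = extreme points of $\{\xi\in\mathbb R_+^N:\max_\pi\xi\cdot\pi\le1\}$, $\mathcal S^*$ its maximal elements, $\Xi(\lambda)=\{\xi\in\mathcal S^*:\xi\cdot\lambda=1\}$. Complete loading condition: $\lambda\in\Lambda$ and $\mathbf 1/\max_{\pi\in\mathcal S}\mathbf 1\cdot\pi$ lies in the convex hull of $\Xi(\lambda)$. Fluid model solution for any scheduling policy with rate $\lambda$: absolutely continuous $q,y:[0,T]\to\mathbb R_+^N$, $s_\pi\ge0$ with $q(t)=q(0)+\lambda t-\sum_\pi s_\pi(t)\pi+y(t)$, $\sum_\pi s_\pi(t)=t$, $y(t)\le\sum_\pi s_\pi(t)\pi$, $s_\pi,y_n$ nondecreasing, and a.e. $\dot y_n(t)=0$ if $q_n(t)>0$. A fluid model solution for MW-$\alpha$ additionally satisfies a.e. $\dot s_\pi(t)=0$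 whenever $\pi\cdot q(t)^\alpha<\max_{\rho\in\mathcal S}\rho\cdot q(t)^\alpha$ (power taken componentwise). *)

(* Defs.v *)
From Stdlib Require Import Reals Lra.
Open Scope R_scope.

(* Vectors in R^N are functions nat -> R, only indices n < N matter.
   The finite schedule set S is given as an indexed family S 0, ..., S (K-1). *)

Fixpoint rsum (n : nat) (f : nat -> R) : R :=
  match n with O => 0 | S m => rsum m f + f m end.

(* maximum of f 0, ..., f (K-1)  (used with K >= 1) *)
Fixpoint rmaxk (K : nat) (f : nat -> R) : R :=
  match K with
  | O => 0
  | S O => f O
  | S m => Rmax (rmaxk m f) (f m)
  end.

Definition dot (N : nat) (x y : nat -> R) : R := rsum N (fun n => x n * y n).

Definition vle (N : nat) (x y : nat -> R) : Prop := forall n, (n < N)%nat -> x n <= y n.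
Definition veq (N : nat) (x y : nat -> R) : Prop := forall n, (n < N)%nat -> x n = y n.

(* componentwise power, with 0^alpha = 0 *)
Definition rpow (x a : R) : R := if Rlt_dec 0 x then Rpower x a else 0.

Definition in_conv (N : nat) (A : (nat -> R) -> Prop) (x : nat -> R) : Prop :=
  exists (m : nat) (p : nat -> nat -> R) (w : nat -> R),
    (forall i, (i < m)%nat -> A (p i) /\ 0 <= w i) /\
    rsum m w = 1 /\
    forall n, (n < N)%nat -> x n = rsum m (fun i => w i * p i n).

Definition schedset (N K : nat) (S : nat -> nat -> R) (x : nat -> R) : Prop :=
  exists k, (k < K)%nat /\ veq N x (S k).

Definition in_Lambda (N K : nat) (S : nat -> nat -> R) (lam : nat -> R) : Prop :=
  (forall n, (n < N)%nat -> 0 <= lam n) /\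
  exists sigma, in_conv N (schedset N K S) sigma /\ vle N lam sigma.

Definition in_dualP (N K : nat) (S : nat -> nat -> R) (xi : nat -> R) : Prop :=
  (forall n, (n < N)%nat -> 0 <= xi n) /\
  rmaxk K (fun k => dot N xi (S k)) <= 1.

Definition in_E (N K : nat) (S : nat -> nat -> R) (xi : nat -> R) : Prop :=
  in_dualP N K S xi /\
  forall (x y : nat -> R) (th : R),
    in_dualP N K S x -> in_dualP N K S y -> 0 < th < 1 ->
    veq N xi (fun n => th * x n + (1 - th) * y n) -> veq N x y.

Definition in_Sstar (N K : nat) (S : nat -> nat -> R) (xi : nat -> R) : Prop :=
  in_E N K S xi /\
  forall xi', in_E N K S xi' -> vle N xi xi' -> veq N xi xi'.

Definition in_Xi (N K : nat) (S : nat -> nat -> R) (lam xi : nat -> R) : Prop :=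
  in_Sstar N K S xi /\ dot N xi lam = 1.

Definition complete_loading (N K : nat) (S : nat -> nat -> R) (lam : nat -> R) : Prop :=
  in_Lambda N K S lam /\
  in_conv N (in_Xi N K S lam)
    (fun _ => 1 / rmaxk K (fun k => rsum N (S k))).

Definition null_set (E : R -> Prop) : Prop :=
  forall eps, 0 < eps ->
    exists a b : nat -> R,
      (forall x, E x -> exists i, a i < x < b i) /\
      (forall i, a i <= b i) /\
      (forall m, rsum m (fun i => b i - a i) <= eps).

Definition ae_on (T : R) (P : R -> Prop) : Prop :=
  null_set (fun t => 0 <= t <= T /\ ~ P t).

Definition abs_cont_on (a b : R) (f : R -> R) : Prop :=
  forall eps, 0 < eps -> exists delta, 0 < delta /\
    forall (m : nat) (u v : nat -> R),
      (forall i, (i < m)%nat -> a <= u i /\ u i <= v i /\ v i <= b) ->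
      (forall i j, (i < m)%nat -> (j < m)%nat -> i <> j -> v i <= u j \/ v j <= u i) ->
      rsum m (fun i => v i - u i) < delta ->
      rsum m (fun i => Rabs (f (v i) - f (u i))) < eps.

Definition nondecr_on (T : R) (f : R -> R) : Prop :=
  forall u v, 0 <= u -> u <= v -> v <= T -> f u <= f v.

(* Fluid model solution on [0,T] (any scheduling policy), arrival rate lam.
   q n, y n : component n of q, y;  s k : cumulative time on schedule S k. *)
Definition fluid_sol (N K : nat) (S : nat -> nat -> R) (lam : nat -> R) (T : R)
  (q y s : nat -> R -> R) : Prop :=
  (forall n, (n < N)%nat ->
     abs_cont_on 0 T (q n) /\ abs_cont_on 0 T (y n) /\ nondecr_on T (y n) /\
     (forall t, 0 <= t <= T -> 0 <= q n t /\ 0 <= y n t)) /\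
  (forall k, (k < K)%nat ->
     nondecr_on T (s k) /\ (forall t, 0 <= t <= T -> 0 <= s k t)) /\
  (forall t, 0 <= t <= T ->
     rsum K (fun k => s k t) = t /\
     forall n, (n < N)%nat ->
       q n t = q n 0 + lam n * t - rsum K (fun k => s k t * S k n) + y n t /\
       y n t <= rsum K (fun k => s k t * S k n)) /\
  (forall n, (n < N)%nat ->
     ae_on T (fun t => 0 < q n t -> derivable_pt_lim (y n) t 0)).

Definition mw_fluid_sol (N K : nat) (S : nat -> nat -> R) (alpha : R) (lam : nat -> R)
  (T : R) (q y s : nat -> R -> R) : Prop :=
  fluid_sol N K S lam T q y s /\
  forall k, (k < K)%nat ->
    ae_on T (fun t =>
      dot N (S k) (fun n => rpow (q n t) alpha)
        < rmaxk K (fun j => dot N (S j) (fun n => rpow (q n t) alpha)) ->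
      derivable_pt_lim (s k) t 0).

(* Main.v *)
Require Import Defs.
From Stdlib Require Import Reals Lra Lia Classical.
Open Scope R_scope.

Lemma rsum_ext n f g : (forall i, (i < n)%nat -> f i = g i) -> rsum n f = rsum n g.
Proof. induction n; simpl; intros H; auto. rewrite IHn by (intros; apply H; lia). rewrite H by lia. auto. Qed.

Lemma rsum_le n f g : (forall i, (i < n)%nat -> f i <= g i) -> rsum n f <= rsum n g.
Proof. induction n; simpl; intros H; [lra|]. assert (H1:=H n (Nat.lt_succ_diag_r n)).
 assert (rsum n f <= rsum n g) by (apply IHn; intros; apply H; lia). lra. Qed.

Lemma rsum_plus n f g : rsum n (fun i => f i + g i) = rsum n f + rsum n g.
Proof. induction n; simpl; [lra|]. rewrite IHn; lra. Qed.

Lemma rsum_minus n f g : rsum n (fun i => f i - g i) = rsum n f - rsum n g.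
Proof. induction n; simpl; [lra|]. rewrite IHn; lra. Qed.

Lemma rsum_scal n c f : rsum n (fun i => c * f i) = c * rsum n f.
Proof. induction n; simpl; [lra|]. rewrite IHn; lra. Qed.

Lemma rsum_scalr n c f : rsum n (fun i => f i * c) = rsum n f * c.
Proof. induction n; simpl; [lra|]. rewrite IHn; lra. Qed.

Lemma rsum_nonneg n f : (forall i, (i < n)%nat -> 0 <= f i) -> 0 <= rsum n f.
Proof. intros H. replace 0 with (rsum n (fun _ => 0)). apply rsum_le; auto.
 induction n; simpl; auto. rewrite IHn; [lra|]. intros; apply H; lia. Qed.

Lemma rsum_zero n : rsum n (fun _ => 0) = 0.
Proof. induction n; simpl; auto. rewrite IHn; lra. Qed.

Lemma rsum_single_le n f i : (forall j, (j < n)%nat -> 0 <= f j) -> (i < n)%nat -> f i <= rsum n f.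
Proof. induction n; intros H Hi; [lia|]. simpl.
 assert (0 <= rsum n f) by (apply rsum_nonneg; intros; apply H; lia).
 destruct (Nat.eq_dec i n). subst. lra.
 assert (f i <= rsum n f) by (apply IHn; [intros; apply H|]; lia).
 assert (0 <= f n) by (apply H; lia). lra. Qed.

Lemma rsum_exch n m (f : nat -> nat -> R) :
  rsum n (fun i => rsum m (fun j => f i j)) = rsum m (fun j => rsum n (fun i => f i j)).
Proof. induction n; simpl. rewrite rsum_zero; auto. rewrite IHn, <- rsum_plus. auto. Qed.

Lemma rsum_telesc M (g : nat -> R) : rsum M (fun j => g (S j) - g j) = g M - g O.
Proof. induction M; simpl; [lra|]. rewrite IHM. lra. Qed.

Lemma rmaxk_ge K f k : (k < K)%nat -> f k <= rmaxk K f.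
Proof. induction K; intros H; [lia|]. destruct K. replace k with O by lia. simpl; lra.
 change (rmaxk (S (S K)) f) with (Rmax (rmaxk (S K) f) (f (S K))).
 destruct (Nat.eq_dec k (S K)). subst. apply Rmax_r.
 eapply Rle_trans; [apply IHK; lia| apply Rmax_l]. Qed.

Lemma rmaxk_att K f : (0 < K)%nat -> exists k, (k < K)%nat /\ rmaxk K f = f k.
Proof. induction K; intros H; [lia|]. destruct K. exists O; split; auto.
 change (rmaxk (S (S K)) f) with (Rmax (rmaxk (S K) f) (f (S K))).
 destruct (IHK ltac:(lia)) as [k [Hk E]]. unfold Rmax. destruct Rle_dec.
 exists (S K); split; auto. exists k; split; auto. Qed.

Lemma rmaxk_le K f c : (0 < K)%nat -> (forall k, (k < K)%nat -> f k <= c) -> rmaxk K f <= c.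
Proof. intros HK H. destruct (rmaxk_att K f HK) as [k [Hk ->]]. auto. Qed.

Lemma conv_dot N m (p : nat -> nat -> R) w x v :
  (forall n, (n < N)%nat -> x n = rsum m (fun i => w i * p i n)) ->
  dot N x v = rsum m (fun i => w i * dot N (p i) v).
Proof. intros H. unfold dot.
 rewrite (rsum_ext N _ (fun n => rsum m (fun i => w i * p i n * v n))).
 rewrite rsum_exch. apply rsum_ext. intros i _. rewrite <- rsum_scal. apply rsum_ext; intros; lra.
 intros n Hn. rewrite H by auto. rewrite <- rsum_scalr. auto. Qed.

Lemma rsum_const M c : rsum M (fun _ => c) = INR M * c.
Proof. induction M; simpl rsum. simpl; ring. rewrite IHM, S_INR. ring. Qed.

Lemma xi_ineq N K S lam T q y s xi t : fluid_sol N K S lam T q y s -> 0<=t<=T ->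
  (forall n, (n<N)%nat -> 0 <= xi n) -> dot N xi lam = 1 ->
  (forall k, (k<K)%nat -> dot N xi (S k) <= 1) ->
  dot N xi (fun n => q n 0) <= dot N xi (fun n => q n t).
Proof.
 intros [H1 [H2 [H3 H4]]] Ht Hxi Hl HS.
 destruct (H3 t Ht) as [Hst Hq].
 assert (E: rsum N (fun n => xi n * rsum K (fun k => s k t * S k n)) = rsum K (fun k => s k t * dot N xi (S k))).
 { unfold dot. rewrite (rsum_ext N _ (fun n => rsum K (fun k => xi n * (s k t * S k n)))).
   rewrite rsum_exch. apply rsum_ext; intros k _. rewrite <- rsum_scal. apply rsum_ext; intros; lra.
   intros; rewrite <- rsum_scal; auto. }
 assert (L1: rsum K (fun k => s k t * dot N xi (S k)) <= rsum K (fun k => s k t)).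
 { apply rsum_le. intros k Hk. destruct (H2 k Hk) as [_ Hs]. specialize (Hs t Ht). specialize (HS k Hk).
   rewrite <- (Rmult_1_r (s k t)) at 2. apply Rmult_le_compat_l; auto. }
 assert (L2: rsum N (fun n => xi n * (q n 0 + lam n * t - rsum K (fun k => s k t * S k n)))
   <= dot N xi (fun n => q n t)).
 { unfold dot. apply rsum_le. intros n Hn. destruct (Hq n Hn) as [Hqn _]. rewrite Hqn.
   destruct (H1 n Hn) as [_ [_ [_ Hy]]]. destruct (Hy t Ht) as [_ Hy']. specialize (Hxi n Hn).
   assert (0 <= xi n * y n t) by (apply Rmult_le_pos; auto). lra. }
 rewrite (rsum_ext N _ (fun n => (xi n * q n 0 + t * (xi n * lam n)) - xi n * rsum K (fun k => s k t * S k n))) in L2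
   by (intros; ring).
 rewrite rsum_minus, rsum_plus, rsum_scal, E in L2. unfold dot in Hl |- *. rewrite Hl in L2. change (dot N xi (fun n => q n t)) with (rsum N (fun n => xi n * q n t)) in L2. lra.
Qed.

Lemma part2 N K S lam : (forall k n, (k < K)%nat -> (n < N)%nat -> 0 <= S k n) -> (0 < K)%nat ->
  complete_loading N K S lam ->
     forall (T : R) (q y s : nat -> R -> R),
       fluid_sol N K S lam T q y s ->
       forall t, 0 <= t <= T ->
         rsum N (fun n => q n 0) <= rsum N (fun n => q n t).
Proof.
 intros HS HK [HL [m [p [w [Hp [Hw Hx]]]]]] T q y s Hf t Ht.
 set (c := rmaxk K (fun k => rsum N (S k))) in *.
 assert (Hc: 0 <= c). { eapply Rle_trans; [|apply (rmaxk_ge K _ O HK)]. apply rsum_nonneg; intros; apply HS; lia. }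
 assert (Dv: forall v, (1 / c) * rsum N v = rsum m (fun i => w i * dot N (p i) v)).
 { intros v. rewrite <- (conv_dot N m p w (fun _ => 1/c) v Hx). unfold dot. rewrite rsum_scal; auto. }
 destruct (Rle_lt_or_eq_dec _ _ Hc) as [Hc'|Hc'].
 - assert (Hineq: (1/c) * rsum N (fun n => q n 0) <= (1/c) * rsum N (fun n => q n t)).
   { rewrite !Dv. apply rsum_le. intros i Hi. destruct (Hp i Hi) as [[[[[Hd1 Hd2] _] _] Hxl] Hwi].
     apply Rmult_le_compat_l; auto. eapply xi_ineq; eauto.
     intros k Hk. eapply Rle_trans; [|apply Hd2]. apply (rmaxk_ge K (fun k => dot N (p i) (S k))); auto. }
   assert (0 < 1/c) by (apply Rdiv_lt_0_compat; lra).
   apply Rmult_le_reg_l with (1/c); auto.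
 - exfalso. specialize (Dv lam). rewrite <- Hc', Rdiv_0_r, Rmult_0_l in Dv.
   rewrite (rsum_ext m _ w) in Dv. lra.
   intros i Hi. destruct (Hp i Hi) as [[_ Hxl] _]. rewrite Hxl; ring.
Qed.

Lemma deriv0_bound f c eps : derivable_pt_lim f c 0 -> 0 < eps ->
  exists r, 0 < r /\ forall h, Rabs h < r -> Rabs (f (c+h) - f c) <= eps * Rabs h.
Proof.
 intros D He. destruct (D eps He) as [[r Hr] H]. exists r; split; auto.
 intros h Hh. destruct (Req_dec h 0) as [->|Hn].
 - rewrite Rplus_0_r, Rminus_diag, Rabs_R0; lra.
 - specialize (H h Hn Hh). rewrite Rminus_0_r in H. unfold Rdiv in H.
   rewrite Rabs_mult, Rabs_inv in H. assert (0 < Rabs h) by (apply Rabs_pos_lt; auto).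
   apply Rmult_lt_compat_r with (r := Rabs h) in H; auto.
   rewrite Rmult_assoc, Rinv_l, Rmult_1_r in H by lra. lra.
Qed.

Lemma lub_near (P : R -> Prop) c y : is_lub P c -> y < c -> exists x, P x /\ y < x.
Proof.
 intros [Hub Hl] Hy. apply NNPP; intros Hn. assert (c <= y). { apply Hl. intros x Hx.
 destruct (Rle_dec x y); auto. exfalso; apply Hn; exists x; split; auto; lra. } lra.
Qed.

Section Core.
Variables (f : R -> R) (a b eps : R) (au bu : nat -> R).
Hypothesis Hab : a <= b.
Hypothesis Heps : 0 <= eps.
Hypothesis Hcov : forall i, au i <= bu i.

Definition gk k x := Rmax 0 (Rmin x (bu k) - au k).
Definition RR K0 x := rsum K0 (fun k => gk k x).

Lemma gk_mono k x y : x <= y -> gk k x <= gk k y.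
Proof. intros. unfold gk. apply Rle_max_compat_l. assert (Rmin x (bu k) <= Rmin y (bu k)) by (apply Rle_min_compat_r; auto). lra. Qed.
Lemma gk_nonneg k x : 0 <= gk k x.
Proof. apply Rmax_l. Qed.
Lemma gk_le k x : gk k x <= bu k - au k.
Proof. unfold gk. apply Rmax_lub. specialize (Hcov k); lra. assert (Rmin x (bu k) <= bu k) by apply Rmin_r. lra. Qed.
Lemma RR_mono K0 x y : x <= y -> RR K0 x <= RR K0 y.
Proof. intros; apply rsum_le; intros; apply gk_mono; auto. Qed.
Lemma RR_K K0 K1 x : (K0 <= K1)%nat -> RR K0 x <= RR K1 x.
Proof. intros H; induction H. lra. unfold RR in *; simpl. pose proof (gk_nonneg m x). lra. Qed.
Lemma RR_bound K0 x : RR K0 x <= rsum K0 (fun k => bu k - au k).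
Proof. apply rsum_le; intros; apply gk_le. Qed.
Lemma RR_step K0 k x z : (k < K0)%nat -> au k <= x -> x <= z -> z <= bu k -> RR K0 x + (z - x) <= RR K0 z.
Proof.
 intros Hk H1 H2 H3. unfold RR. assert (rsum K0 (fun j => gk j z) - rsum K0 (fun j => gk j x) >= z - x); [|lra].
 rewrite <- rsum_minus. apply Rle_ge. eapply Rle_trans; [|apply (rsum_single_le _ _ k)]; auto.
 - unfold gk. rewrite !Rmin_left by lra. rewrite !Rmax_right by lra. lra.
 - intros; pose proof (gk_mono j x z H2); lra.
Qed.

Definition Q x := exists m (u v : nat -> R) K0,
  (forall i, (i < m)%nat -> a <= u i /\ u i <= v i /\ v i <= x) /\
  (forall i j, (i < m)%nat -> (j < m)%nat -> i <> j -> v i <= u j \/ v j <= u i) /\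
  rsum m (fun i => v i - u i) <= RR K0 x /\
  f x - f a <= eps * (x - a) + rsum m (fun i => Rabs (f (v i) - f (u i))).

Lemma Q_a : Q a.
Proof. exists O, (fun _ => 0), (fun _ => 0), O. repeat split; intros; try lia. simpl. unfold RR; simpl; lra.
 simpl. lra. Qed.

Lemma Q_ext x y : Q x -> x <= y -> f y - f x <= eps * (y - x) -> Q y.
Proof.
 intros [m [u [v [K0 [H1 [H2 [H3 H4]]]]]]] Hxy Hf. exists m, u, v, K0. split; [|split; [|split]]; auto.
 - intros i Hi; destruct (H1 i Hi) as [? [? ?]]; repeat split; lra.
 - pose proof (RR_mono K0 x y Hxy); lra.
 - lra.
Qed.

Lemma Q_add x z k : Q x -> a <= x -> x <= z -> au k <= x -> z <= bu k -> Q z.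
Proof.
 intros [m [u [v [K0 [H1 [H2 [H3 H4]]]]]]] Hax Hxz Hk1 Hk2.
 exists (S m), (fun i => if Nat.eqb i m then x else u i), (fun i => if Nat.eqb i m then z else v i), (Nat.max K0 (S k)).
 assert (Ea : forall (F : R -> R -> R), rsum m (fun i => F (if Nat.eqb i m then z else v i) (if Nat.eqb i m then x else u i)) = rsum m (fun i => F (v i) (u i))).
 { intros F; apply rsum_ext; intros i Hi. replace (Nat.eqb i m) with false; auto. symmetry; apply Nat.eqb_neq; lia. }
 split; [|split; [|split]].
 - intros i Hi. destruct (Nat.eqb i m) eqn:E. repeat split; lra. apply Nat.eqb_neq in E. destruct (H1 i ltac:(lia)) as [? [? ?]]; repeat split; lra.
 - intros i j Hi Hj Hij. destruct (Nat.eqb i m) eqn:E; destruct (Nat.eqb j m) eqn:E'.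
   + apply Nat.eqb_eq in E; apply Nat.eqb_eq in E'; lia.
   + apply Nat.eqb_neq in E'. destruct (H1 j ltac:(lia)) as [? [? ?]]. right; lra.
   + apply Nat.eqb_neq in E. destruct (H1 i ltac:(lia)) as [? [? ?]]. left; lra.
   + apply Nat.eqb_neq in E; apply Nat.eqb_neq in E'. apply H2; lia.
 - simpl. rewrite (Ea (fun p q => p - q)). rewrite Nat.eqb_refl.
   pose proof (RR_K K0 (Nat.max K0 (S k)) x ltac:(lia)).
   pose proof (RR_step (Nat.max K0 (S k)) k x z ltac:(lia) Hk1 Hxz Hk2). lra.
 - simpl. rewrite (Ea (fun p q => Rabs (f p - f q))). rewrite Nat.eqb_refl.
   pose proof (Rle_abs (f z - f x)). assert (0 <= eps * (z - x)) by (apply Rmult_le_pos; lra). lra.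
Qed.

Lemma Q_b (E : R -> Prop) : 0 < eps -> (forall x, E x -> exists i, au i < x < bu i) ->
  (forall t, a <= t <= b -> ~ E t -> derivable_pt_lim f t 0) -> Q b.
Proof.
 intros He HE HD.
 set (P := fun x => a <= x <= b /\ Q x).
 assert (Pb : bound P) by (exists b; intros x [Hx _]; lra).
 assert (Pa : exists x, P x) by (exists a; split; [lra| apply Q_a]).
 destruct (completeness P Pb Pa) as [c Hc].
 assert (Hac : a <= c) by (apply (proj1 Hc); split; [lra|apply Q_a]).
 assert (Hcb : c <= b) by (apply (proj2 Hc); intros x [Hx _]; lra).
 destruct (classic (E c)) as [Ec|Ec].
 - destruct (HE c Ec) as [i Hi].
   destruct (lub_near P c (au i) Hc ltac:(lra)) as [x [[Hx Qx] Hxi]].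
   assert (Hxc : x <= c) by (apply (proj1 Hc); split; auto).
   set (z := Rmin b ((c + bu i)/2)).
   assert (Hz1 : z <= b) by apply Rmin_l.
   assert (Hz2 : z <= (c + bu i)/2) by apply Rmin_r.
   assert (Hz3 : c <= z) by (apply Rmin_glb; lra).
   assert (Qz : Q z) by (apply (Q_add x z i); auto; lra).
   assert (Hzc : z <= c) by (apply (proj1 Hc); split; auto; lra).
   destruct (Rlt_dec c b) as [Hlt|Hge].
   + exfalso. assert (c < z) by (apply Rmin_glb_lt; lra). lra.
   + assert (z = b) by lra. rewrite <- H. auto.
 - destruct (deriv0_bound f c eps (HD c ltac:(lra) Ec) He) as [r [Hr Hrb]].
   destruct (lub_near P c (c - r) Hc ltac:(lra)) as [x [[Hx Qx] Hxi]].
   assert (Hxc : x <= c) by (apply (proj1 Hc); split; auto).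
   assert (Qc : Q c).
   { apply (Q_ext x c Qx Hxc). specialize (Hrb (x - c) ltac:(rewrite Rabs_left1; lra)).
     replace (c + (x - c)) with x in Hrb by ring. rewrite (Rabs_left1 (x - c)) in Hrb by lra.
     pose proof (Rle_abs (f c - f x)). rewrite Rabs_minus_sym in H. lra. }
   set (z := Rmin b (c + r/2)).
   assert (Hz1 : z <= b) by apply Rmin_l.
   assert (Hz2 : z <= c + r/2) by apply Rmin_r.
   assert (Hz3 : c <= z) by (apply Rmin_glb; lra).
   assert (Qz : Q z).
   { apply (Q_ext c z Qc Hz3). specialize (Hrb (z - c) ltac:(rewrite Rabs_right; lra)).
     replace (c + (z - c)) with z in Hrb by ring. rewrite (Rabs_right (z - c)) in Hrb by lra.
     pose proof (Rle_abs (f z - f c)). lra. }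
   assert (Hzc : z <= c) by (apply (proj1 Hc); split; auto; lra).
   destruct (Rlt_dec c b) as [Hlt|Hge].
   + exfalso. assert (c < z) by (apply Rmin_glb_lt; lra). lra.
   + assert (z = b) by lra. rewrite <- H. auto.
Qed.
End Core.

Lemma core f a b (E : R -> Prop) : a <= b -> null_set E -> abs_cont_on a b f ->
  (forall t, a <= t <= b -> ~ E t -> derivable_pt_lim f t 0) -> f b <= f a.
Proof.
 intros Hab HE Hac HD.
 assert (K: forall eps eta, 0 < eps -> 0 < eta -> f b - f a <= eps * (b - a) + eta).
 { intros eps eta He Het. destruct (Hac eta Het) as [d [Hd Hdp]].
   destruct (HE (d/2) ltac:(lra)) as [au [bu [Hc [Hcov Hs]]]].
   destruct (Q_b f a b eps au bu Hab ltac:(lra) E He Hc HD) as [m [u [v [K0 [H1 [H2 [H3 H4]]]]]]].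
   assert (rsum m (fun i => Rabs (f (v i) - f (u i))) < eta).
   { apply Hdp; [intros i Hi; destruct (H1 i Hi) as [? [? ?]]; repeat split; lra | exact H2 |].
     pose proof (RR_bound au bu Hcov K0 b). specialize (Hs K0). lra. }
   lra. }
 destruct (Rle_dec (f b) (f a)) as [?|Hn]; auto. exfalso. apply Rnot_le_lt in Hn.
 remember (f b - f a) as D eqn:ED. assert (HD0 : 0 < D) by lra.
 assert (Hq : (b - a) / (b - a + 1) <= 1).
 { apply Rmult_le_reg_r with (b-a+1); [lra|]. unfold Rdiv. rewrite Rmult_assoc, Rinv_l; lra. }
 assert (Hq0 : 0 <= (b - a) / (b - a + 1)) by (apply Rmult_le_pos; [lra| left; apply Rinv_0_lt_compat; lra]).
 specialize (K (D / 4 * / (b - a + 1)) (D/4) ltac:(apply Rmult_lt_0_compat; [lra|apply Rinv_0_lt_compat; lra]) ltac:(lra)).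
 replace (D / 4 * / (b - a + 1) * (b - a)) with ((D/4) * ((b-a) / (b-a+1))) in K by (unfold Rdiv; ring).
 assert ((D/4) * ((b-a) / (b-a+1)) <= D/4 * 1) by (apply Rmult_le_compat_l; lra).
 lra.
Qed.

Lemma rpow_pos x a : 0 < x -> rpow x a = Rpower x a.
Proof. intros H. unfold rpow. destruct Rlt_dec; auto; lra. Qed.
Lemma rpow_nonpos x a : x <= 0 -> rpow x a = 0.
Proof. intros H. unfold rpow. destruct Rlt_dec; auto; lra. Qed.
Lemma Rpower_pos x a : 0 < Rpower x a.
Proof. unfold Rpower. apply exp_pos. Qed.
Lemma rpow_nonneg x a : 0 <= rpow x a.
Proof. unfold rpow. destruct Rlt_dec. left; apply Rpower_pos. lra. Qed.
Lemma rpow_mono x y c : 0 <= c -> 0 <= x <= y -> rpow x c <= rpow y c.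
Proof. intros Hc Hxy. destruct (Rle_lt_dec x 0).
 rewrite (rpow_nonpos x) by auto. apply rpow_nonneg.
 rewrite !rpow_pos by lra. apply Rle_Rpower_l; lra. Qed.
Lemma rpow_p x a : 0 <= x -> rpow x (1 + a) = x * rpow x a.
Proof. intros H. destruct (Rle_lt_dec x 0). rewrite !rpow_nonpos by auto. ring.
 rewrite !rpow_pos by lra. rewrite Rpower_plus, Rpower_1 by lra. auto. Qed.
Lemma rpow_inv e a : 0 < a -> 0 < e -> rpow (rpow e (1/a)) a = e.
Proof. intros Ha He. rewrite (rpow_pos e) by auto. rewrite rpow_pos by apply Rpower_pos.
 rewrite Rpower_mult. replace (1/a*a) with 1 by (field; lra). apply Rpower_1; auto. Qed.

Lemma tangent a x m : 0 < a -> 0 <= x -> 0 <= m ->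
  rpow m (1 + a) + (1 + a) * rpow m a * (x - m) <= rpow x (1 + a).
Proof.
 intros Ha Hx Hm. destruct (Req_dec m 0) as [->|Hm0].
 { rewrite !rpow_nonpos by lra. pose proof (rpow_nonneg x (1+a)). lra. }
 destruct (Req_dec x 0) as [->|Hx0].
 { rewrite rpow_p by lra. rewrite (rpow_nonpos 0) by lra. pose proof (rpow_nonneg m a).
   assert (0 <= a * (m * rpow m a)) by (apply Rmult_le_pos; [lra| apply Rmult_le_pos; lra]). nra. }
 assert (D : forall c, 0 < c -> derivable_pt_lim (fun y => Rpower y (1 + a)) c ((1+a) * Rpower c a)).
 { intros c Hc. replace a with ((1 + a) - 1) at 2 by ring. apply derivable_pt_lim_power; auto. }
 rewrite !rpow_pos by lra.
 destruct (Rlt_le_dec m x) as [Hlt|Hle].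
 - destruct (MVT_cor2 (fun y => Rpower y (1+a)) (fun c => (1+a) * Rpower c a) m x Hlt) as [c [Ec Hc]].
   { intros c Hc; apply D; lra. }
   simpl in Ec. assert (Rpower m a <= Rpower c a) by (apply Rle_Rpower_l; lra).
   assert ((1 + a) * Rpower m a * (x - m) <= (1 + a) * Rpower c a * (x - m)).
   { apply Rmult_le_compat_r; [lra|]. apply Rmult_le_compat_l; lra. } lra.
 - destruct (Req_dec x m) as [->|Hne]. lra.
   destruct (MVT_cor2 (fun y => Rpower y (1+a)) (fun c => (1+a) * Rpower c a) x m ltac:(lra)) as [c [Ec Hc]].
   { intros c Hc; apply D; lra. }
   simpl in Ec. assert (Rpower c a <= Rpower m a) by (apply Rle_Rpower_l; lra).
   assert ((1 + a) * Rpower c a * (m - x) <= (1 + a) * Rpower m a * (m - x)).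
   { apply Rmult_le_compat_r; [lra|]. apply Rmult_le_compat_l; lra. } lra.
Qed.

Lemma cont_eps f x0 : (forall eps, 0 < eps -> exists alp, 0 < alp /\ forall x, Rabs (x - x0) < alp -> Rabs (f x - f x0) < eps) -> continuity_pt f x0.
Proof. intros H eps He. destruct (H eps He) as [alp [Ha Hx]]. exists alp; split; auto.
 intros x [_ Hd]. apply Hx. exact Hd. Qed.

Lemma eps_cont f x0 : continuity_pt f x0 -> forall eps, 0 < eps -> exists alp, 0 < alp /\ forall x, Rabs (x - x0) < alp -> Rabs (f x - f x0) < eps.
Proof. intros H eps He. destruct (H eps He) as [alp [Ha Hx]]. exists alp; split; auto.
 intros x Hd. destruct (Req_dec x x0) as [->|Hn]. rewrite Rminus_diag, Rabs_R0; auto.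
 apply (Hx x). split; [split; [exact I| auto]| exact Hd]. Qed.

Lemma rpow_cont a x0 : 0 < a -> continuity_pt (fun x => rpow x a) x0.
Proof.
 intros Ha. destruct (Rtotal_order x0 0) as [Hn|[->|Hp]].
 - apply continuity_pt_locally_ext with (f := fun _ => 0) (a := - x0). lra.
   intros y Hy. unfold Rdist in Hy. rewrite rpow_nonpos; auto. apply Rabs_def2 in Hy. lra.
   apply continuity_pt_const. intros u v; auto.
 - apply cont_eps. intros eps He. exists (rpow eps (1/a)). split. rewrite rpow_pos by auto. apply Rpower_pos.
   intros x Hx. rewrite Rminus_0_r in Hx. rewrite (rpow_nonpos 0) by lra. rewrite Rminus_0_r.
   destruct (Rle_lt_dec x 0). rewrite rpow_nonpos, Rabs_R0 by auto. auto.
   rewrite Rabs_right by (apply Rle_ge, rpow_nonneg). rewrite <- (rpow_inv eps a) by auto.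
   rewrite !(rpow_pos x) by auto. rewrite (rpow_pos (rpow eps (1/a))) by (rewrite rpow_pos by auto; apply Rpower_pos).
   apply Rlt_Rpower_l; auto. rewrite Rabs_right in Hx by lra. lra.
 - apply continuity_pt_locally_ext with (f := fun x => Rpower x a) (a := x0). lra.
   intros y Hy. unfold Rdist in Hy. rewrite rpow_pos; auto. apply Rabs_def2 in Hy. lra.
   apply derivable_continuous_pt. exists (a * Rpower x0 (a - 1)). apply derivable_pt_lim_power; auto.
Qed.

Definition ucont (T : R) (f : R -> R) := forall e, 0 < e -> exists d, 0 < d /\
  forall x y, 0 <= x <= T -> 0 <= y <= T -> Rabs (x - y) < d -> Rabs (f x - f y) < e.

Lemma ac_restrict a b u v f : abs_cont_on a b f -> a <= u -> v <= b -> abs_cont_on u v f.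
Proof. intros H Hu Hv e He. destruct (H e He) as [d [Hd Hp]]. exists d; split; auto.
 intros m uu vv H1 H2 H3. apply Hp; auto. intros i Hi; destruct (H1 i Hi) as [? [? ?]]; repeat split; lra. Qed.

Lemma lip_ac u v f : (forall x y, u <= x -> x <= y -> y <= v -> Rabs (f y - f x) <= y - x) -> abs_cont_on u v f.
Proof. intros H e He. exists e; split; auto. intros m uu vv H1 H2 H3.
 eapply Rle_lt_trans; [|exact H3]. apply rsum_le. intros i Hi; destruct (H1 i Hi) as [? [? ?]]; apply H; auto. Qed.

Lemma ac_ucont T f : abs_cont_on 0 T f -> ucont T f.
Proof. intros H e He. destruct (H e He) as [d [Hd Hp]]. exists d; split; auto.
 intros x y Hx Hy Hxy.
 destruct (Rle_dec x y).
 - specialize (Hp 1%nat (fun _ => x) (fun _ => y)). simpl in Hp. rewrite !Rplus_0_l in Hp.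
   rewrite Rabs_minus_sym. apply Hp. intros; repeat split; lra. intros; lia.
   rewrite Rabs_minus_sym, Rabs_right in Hxy by lra. lra.
 - specialize (Hp 1%nat (fun _ => y) (fun _ => x)). simpl in Hp. rewrite !Rplus_0_l in Hp.
   apply Hp. intros; repeat split; lra. intros; lia.
   rewrite Rabs_right in Hxy by lra. lra.
Qed.

Lemma ucont_fin T n (F : nat -> R -> R) : (forall i, (i < n)%nat -> ucont T (F i)) ->
  forall e, 0 < e -> exists d, 0 < d /\ forall i x y, (i < n)%nat -> 0 <= x <= T -> 0 <= y <= T -> Rabs (x - y) < d -> Rabs (F i x - F i y) < e.
Proof. induction n; intros H e He.
 - exists 1; split; [lra|]. intros; lia.
 - destruct (IHn ltac:(intros; apply H; lia) e He) as [d1 [Hd1 P1]].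
   destruct (H n ltac:(lia) e He) as [d2 [Hd2 P2]].
   exists (Rmin d1 d2); split. apply Rmin_glb_lt; auto.
   intros i x y Hi Hx Hy Hxy. pose proof (Rmin_l d1 d2). pose proof (Rmin_r d1 d2).
   destruct (Nat.eq_dec i n). subst; apply P2; auto; lra. apply P1; auto; lia || lra.
Qed.

Definition clamp T x := Rmax 0 (Rmin x T).
Lemma clamp_prop T x y : 0 <= T -> 0 <= clamp T x <= T /\ Rabs (clamp T x - clamp T y) <= Rabs (x - y).
Proof. intros HT. unfold clamp, Rmax, Rmin. repeat destruct Rle_dec; unfold Rabs; repeat destruct Rcase_abs; repeat split; lra. Qed.
Lemma clamp_id T x : 0 <= x <= T -> clamp T x = x.
Proof. intros H. unfold clamp, Rmax, Rmin. repeat destruct Rle_dec; lra. Qed.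

Lemma ucont_rpow T f a : 0 < a -> 0 <= T -> ucont T f -> ucont T (fun x => rpow (f x) a).
Proof.
 intros Ha HT Hf.
 assert (Hc : forall x, 0 <= x <= T -> continuity_pt (fun x => rpow (f (clamp T x)) a) x).
 { intros x Hx. apply cont_eps. intros e He.
   destruct (eps_cont _ _ (rpow_cont a (f (clamp T x)) Ha) e He) as [al [Hal Pal]].
   destruct (Hf al Hal) as [d [Hd Pd]]. exists d; split; auto. intros y Hy.
   apply Pal. apply Pd; try apply clamp_prop; auto.
   destruct (clamp_prop T y x HT) as [_ H]. lra. }
 pose proof (Heine _ _ (compact_P3 0 T) Hc) as U.
 intros e He. destruct (U (mkposreal e He)) as [[d Hd] P]. exists d; split; auto.
 intros x y Hx Hy Hxy. specialize (P x y Hx Hy Hxy). simpl in P. rewrite !clamp_id in P by auto. auto.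
Qed.

Lemma rsum_abs n f : Rabs (rsum n f) <= rsum n (fun i => Rabs (f i)).
Proof. induction n; simpl. rewrite Rabs_R0; lra. eapply Rle_trans; [apply Rabs_triang|]. lra. Qed.

Lemma ucont_lin T N (c : nat -> R) (F : nat -> R -> R) : (forall n, (n < N)%nat -> 0 <= c n) ->
  (forall n, (n < N)%nat -> ucont T (F n)) -> ucont T (fun x => rsum N (fun n => c n * F n x)).
Proof.
 intros Hc HF e He. set (C := rsum N c + 1).
 assert (HC : 0 < C) by (unfold C; pose proof (rsum_nonneg N c Hc); lra).
 destruct (ucont_fin T N F HF (e / C) ltac:(apply Rdiv_lt_0_compat; auto)) as [d [Hd P]].
 exists d; split; auto. intros x y Hx Hy Hxy. rewrite <- rsum_minus.
 eapply Rle_lt_trans; [apply rsum_abs|].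
 apply Rle_lt_trans with (rsum N (fun n => c n * (e / C))).
 - apply rsum_le. intros n Hn. replace (c n * F n x - c n * F n y) with (c n * (F n x - F n y)) by ring.
   rewrite Rabs_mult, Rabs_right by (apply Rle_ge; auto). apply Rmult_le_compat_l; auto. left; apply P; auto.
 - rewrite rsum_scalr. apply Rlt_le_trans with (C * (e / C)).
   apply Rmult_lt_compat_r. apply Rdiv_lt_0_compat; auto. unfold C; lra.
   right; field; lra.
Qed.

Lemma lam_bound N K S lam W : in_Lambda N K S lam -> (forall n, (n < N)%nat -> 0 <= W n) ->
  dot N lam W <= rmaxk K (fun j => dot N (S j) W).
Proof.
 intros [Hl [sig [[m [p [w [Hp [Hw Hx]]]]] Hle]]] HW.
 apply Rle_trans with (dot N sig W).
 { apply rsum_le. intros n Hn. apply Rmult_le_compat_r; auto. }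
 rewrite (conv_dot N m p w sig W Hx).
 apply Rle_trans with (rsum m (fun i => w i * rmaxk K (fun j => dot N (S j) W))).
 - apply rsum_le. intros i Hi. destruct (Hp i Hi) as [[k [Hk Hv]] Hwi].
   apply Rmult_le_compat_l; auto. replace (dot N (p i) W) with (dot N (S k) W).
   apply (rmaxk_ge K (fun j => dot N (S j) W)); auto.
   apply rsum_ext; intros n Hn; rewrite Hv; auto.
 - rewrite rsum_scalr, Hw. lra.
Qed.

Section Lyap.
Variables (N K : nat) (S : nat -> nat -> R) (lam : nat -> R) (alpha T : R) (q y s : nat -> R -> R).
Hypothesis HK : (0 < K)%nat.
Hypothesis HS : forall k n, (k < K)%nat -> (n < N)%nat -> 0 <= S k n.
Hypothesis Hlam : in_Lambda N K S lam.
Hypothesis Ha : 0 < alpha.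
Hypothesis Hmw : mw_fluid_sol N K S alpha lam T q y s.

Definition g k tau := dot N (S k) (fun n => rpow (q n tau) alpha).
Definition Mx tau := rmaxk K (fun j => g j tau).
Definition L tau := rsum N (fun n => rpow (q n tau) (1 + alpha)).

Lemma step u v gam c :
  0 <= u -> u <= v -> v <= T -> 0 <= c ->
  (forall k, (k < K)%nat -> s k v - s k u = 0 \/ Mx v - gam <= g k v) ->
  (forall n, (n < N)%nat -> y n v - y n u = 0 \/ rpow (q n v) alpha <= c) ->
  L v - L u <= (1 + alpha) * ((v - u) * gam + c * rsum N (fun n => y n v - y n u)).
Proof.
 intros Hu Huv Hv Hc C1 C2.
 destruct Hmw as [[H1 [H2 [H3 H4]]] H5].
 destruct (H3 u ltac:(lra)) as [Hsu Hqu]. destruct (H3 v ltac:(lra)) as [Hsv Hqv].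
 set (W := fun n => rpow (q n v) alpha).
 assert (T1 : L v - L u <= (1 + alpha) * rsum N (fun n => W n * (q n v - q n u))).
 { unfold L. rewrite <- rsum_minus, <- rsum_scal. apply rsum_le. intros n Hn.
   destruct (H1 n Hn) as [_ [_ [_ Hq]]]. destruct (Hq u ltac:(lra)) as [Hqu0 _]. destruct (Hq v ltac:(lra)) as [Hqv0 _].
   pose proof (tangent alpha (q n u) (q n v) Ha Hqu0 Hqv0). unfold W. lra. }
 assert (E1 : rsum N (fun n => W n * (q n v - q n u)) =
   (v - u) * dot N lam W - rsum K (fun k => (s k v - s k u) * g k v) + rsum N (fun n => W n * (y n v - y n u))).
 { rewrite (rsum_ext N _ (fun n => ((v - u) * (lam n * W n) - rsum K (fun k => (s k v - s k u) * (S k n * W n))) + W n * (y n v - y n u))).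
   - rewrite rsum_plus, rsum_minus, rsum_scal, rsum_exch. f_equal. f_equal. apply rsum_ext. intros k _.
     unfold g, dot. rewrite <- rsum_scal. auto.
   - intros n Hn. destruct (Hqu n Hn) as [Equ _]. destruct (Hqv n Hn) as [Eqv _]. rewrite Equ, Eqv.
     rewrite (rsum_ext K (fun k => (s k v - s k u) * (S k n * W n)) (fun k => (s k v * S k n - s k u * S k n) * W n)) by (intros; ring).
     rewrite rsum_scalr, rsum_minus. ring. }
 assert (B1 : dot N lam W <= Mx v).
 { apply lam_bound; auto. intros; apply rpow_nonneg. }
 assert (B2 : (v - u) * (Mx v - gam) <= rsum K (fun k => (s k v - s k u) * g k v)).
 { assert (Esum: v - u = rsum K (fun k => s k v - s k u)) by (rewrite rsum_minus, Hsu, Hsv; auto).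
   rewrite Esum, <- rsum_scalr.
   apply rsum_le. intros k Hk. destruct (H2 k Hk) as [Hm _].
   assert (0 <= s k v - s k u) by (pose proof (Hm u v Hu Huv Hv); lra).
   destruct (C1 k Hk) as [E|E]. rewrite E; lra. apply Rmult_le_compat_l; auto. }
 assert (B3 : rsum N (fun n => W n * (y n v - y n u)) <= c * rsum N (fun n => y n v - y n u)).
 { rewrite <- rsum_scal. apply rsum_le. intros n Hn. destruct (H1 n Hn) as [_ [_ [Hm _]]].
   assert (0 <= y n v - y n u) by (pose proof (Hm u v Hu Huv Hv); lra).
   destruct (C2 n Hn) as [E|E]. rewrite E; lra. apply Rmult_le_compat_r; auto. }
 assert (0 <= v - u) by lra.
 assert ((v - u) * dot N lam W <= (v - u) * Mx v) by (apply Rmult_le_compat_l; auto).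
 rewrite E1 in T1. assert (0 < 1 + alpha) by lra.
 apply Rle_trans with ((1 + alpha) * ((v - u) * Mx v - (v - u) * (Mx v - gam) + c * rsum N (fun n => y n v - y n u))).
 - eapply Rle_trans; [exact T1|]. apply Rmult_le_compat_l; lra.
 - right; f_equal; ring.
Qed.

Lemma y_flat n u v : (n < N)%nat -> 0 <= u -> u <= v -> v <= T ->
  (forall tau, u <= tau <= v -> 0 < q n tau) -> y n v - y n u = 0.
Proof.
 intros Hn Hu Huv Hv Hpos. destruct Hmw as [[H1 [H2 [H3 H4]]] H5].
 destruct (H1 n Hn) as [_ [Hac [Hm _]]].
 pose proof (core (y n) u v _ Huv (H4 n Hn) (ac_restrict 0 T u v _ Hac Hu Hv)) as Hc.
 assert (y n v <= y n u).
 { apply Hc. intros tau Ht HE. apply NNPP. intros Hd. apply HE. split. lra. intros Hi. apply Hd, Hi, Hpos; auto. }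
 pose proof (Hm u v Hu Huv Hv). lra.
Qed.

Lemma s_lip k x z : (k < K)%nat -> 0 <= x -> x <= z -> z <= T -> 0 <= s k z - s k x <= z - x.
Proof.
 intros Hk Hx Hxz Hz. destruct Hmw as [[H1 [H2 [H3 H4]]] H5].
 destruct (H3 x ltac:(lra)) as [Ex _]. destruct (H3 z ltac:(lra)) as [Ez _].
 assert (Hmon : forall j, (j < K)%nat -> 0 <= s j z - s j x).
 { intros j Hj. destruct (H2 j Hj) as [Hm _]. pose proof (Hm x z Hx Hxz Hz). lra. }
 split. auto.
 pose proof (rsum_single_le K (fun j => s j z - s j x) k Hmon Hk). simpl in H.
 rewrite rsum_minus, Ex, Ez in H. lra.
Qed.

Lemma s_flat k u v : (k < K)%nat -> 0 <= u -> u <= v -> v <= T ->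
  (forall tau, u <= tau <= v -> g k tau < Mx tau) -> s k v - s k u = 0.
Proof.
 intros Hk Hu Huv Hv Hlt. pose proof (s_lip k u v Hk Hu Huv Hv) as Hl0.
 destruct Hmw as [[H1 [H2 [H3 H4]]] H5].
 assert (Hac : abs_cont_on u v (s k)).
 { apply lip_ac. intros x z Hx Hxz Hz. pose proof (s_lip k x z Hk ltac:(lra) Hxz ltac:(lra)).
   rewrite Rabs_right; lra. }
 pose proof (core (s k) u v _ Huv (H5 k Hk) Hac) as Hc.
 assert (s k v <= s k u).
 { apply Hc. intros tau Ht HE. apply NNPP. intros Hd. apply HE. split. lra. intros Hi. apply Hd, Hi.
   apply Hlt; auto. }
 lra.
Qed.

Lemma mesh gam th : 0 <= T -> 0 < gam -> 0 < th -> exists d, 0 < d /\ forall u v, 0 <= u -> u <= v -> v <= T -> v - u < d ->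
  (forall k, (k < K)%nat -> s k v - s k u = 0 \/ Mx v - gam <= g k v) /\
  (forall n, (n < N)%nat -> y n v - y n u = 0 \/ rpow (q n v) alpha <= rpow th alpha).
Proof.
 intros HT Hg Hth. destruct Hmw as [[H1 [H2 [H3 H4]]] H5].
 assert (Uq : forall n, (n < N)%nat -> ucont T (q n)).
 { intros n Hn. apply ac_ucont. apply (H1 n Hn). }
 destruct (ucont_fin T N q Uq th Hth) as [d1 [Hd1 P1]].
 assert (Ug : forall k, (k < K)%nat -> ucont T (g k)).
 { intros k Hk. unfold g, dot. apply (ucont_lin T N (S k) (fun n x => rpow (q n x) alpha)).
   intros; apply HS; auto. intros n Hn. apply ucont_rpow; auto. }
 destruct (ucont_fin T K g Ug (gam/2) ltac:(lra)) as [d2 [Hd2 P2]].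
 exists (Rmin d1 d2). split. apply Rmin_glb_lt; auto. intros u v Hu Huv Hv Hd.
 pose proof (Rmin_l d1 d2). pose proof (Rmin_r d1 d2).
 assert (Hcl : forall tau, u <= tau <= v -> Rabs (tau - v) < Rmin d1 d2).
 { intros tau Ht. rewrite Rabs_left1 by lra. lra. }
 split.
 - intros k Hk. destruct (Rle_dec (Mx v - gam) (g k v)) as [?|Hn]. right; auto. left.
   apply (s_flat k u v Hk Hu Huv Hv). intros tau Ht.
   destruct (rmaxk_att K (fun j => g j v) HK) as [j [Hj Ej]]. unfold Mx in Hn. rewrite Ej in Hn.
   pose proof (rmaxk_ge K (fun j => g j tau) j Hj). unfold Mx.
   specialize (Hcl tau Ht).
   pose proof (P2 k tau v Hk ltac:(lra) ltac:(lra) ltac:(lra)) as Pk.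
   pose proof (P2 j tau v Hj ltac:(lra) ltac:(lra) ltac:(lra)) as Pj.
   apply Rabs_def2 in Pk. apply Rabs_def2 in Pj. simpl in H6. lra.
 - intros n Hn. destruct (H1 n Hn) as [_ [_ [_ Hq]]]. destruct (Hq v ltac:(lra)) as [Hqv _].
   destruct (Rle_dec (q n v) th). right. apply rpow_mono; lra. left.
   apply (y_flat n u v Hn Hu Huv Hv). intros tau Ht. specialize (Hcl tau Ht).
   pose proof (P1 n tau v Hn ltac:(lra) ltac:(lra) ltac:(lra)) as Pn. apply Rabs_def2 in Pn. lra.
Qed.

Lemma L_bound t gam th : 0 <= t <= T -> 0 < gam -> 0 < th ->
  L t - L 0 <= (1 + alpha) * (t * gam + rpow th alpha * rsum N (fun n => y n t - y n 0)).
Proof.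
 intros Ht Hg Hth. destruct (mesh gam th ltac:(lra) Hg Hth) as [d [Hd P]].
 destruct (INR_unbounded (t / d)) as [M HM].
 assert (Hdt : 0 <= t / d) by (apply Rmult_le_pos; [lra| left; apply Rinv_0_lt_compat; auto]).
 assert (HM0 : (0 < M)%nat). { destruct M. simpl in HM. lra. lia. }
 assert (HMr : 0 < INR M) by (apply lt_0_INR; auto).
 set (h := t / INR M).
 assert (Hh : 0 <= h) by (apply Rmult_le_pos; [lra| left; apply Rinv_0_lt_compat; auto]).
 assert (Hhd : h < d).
 { unfold h. apply Rmult_lt_reg_r with (INR M); auto. unfold Rdiv. rewrite Rmult_assoc, Rinv_l, Rmult_1_r by lra.
   apply (Rmult_lt_compat_r d) in HM; [| lra]. unfold Rdiv in HM; rewrite Rmult_assoc, Rinv_l, Rmult_1_r in HM by lra. lra. }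
 set (tau := fun j : nat => INR j * h).
 assert (Htau : forall j, (j <= M)%nat -> 0 <= tau j <= t).
 { intros j Hj. unfold tau. split. apply Rmult_le_pos; auto. apply pos_INR.
   apply Rle_trans with (INR M * h). apply Rmult_le_compat_r; auto. apply le_INR; auto.
   unfold h. right. field. lra. }
 assert (HtM : tau M = t) by (unfold tau, h; field; lra).
 assert (Ht0 : tau O = 0) by (unfold tau; simpl; ring).
 assert (HtS : forall j, tau (Datatypes.S j) = tau j + h) by (intros j; unfold tau; rewrite S_INR; ring).
 set (c := rpow th alpha).
 assert (Hc : 0 <= c) by apply rpow_nonneg.
 assert (E1 : L t - L 0 = rsum M (fun j => L (tau (Datatypes.S j)) - L (tau j))).
 { rewrite (rsum_telesc M (fun j => L (tau j))). rewrite HtM, Ht0. auto. }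
 assert (E2 : rsum M (fun j => (1 + alpha) * ((tau (Datatypes.S j) - tau j) * gam + c * rsum N (fun n => y n (tau (Datatypes.S j)) - y n (tau j))))
   = (1 + alpha) * (t * gam + c * rsum N (fun n => y n t - y n 0))).
 { rewrite rsum_scal, rsum_plus, rsum_scal, rsum_exch.
   rewrite (rsum_ext M _ (fun _ => h * gam)) by (intros; rewrite HtS; ring).
   rewrite (rsum_ext N _ (fun n => y n t - y n 0)).
   rewrite rsum_const. replace (INR M * (h * gam)) with (t * gam) by (unfold h; field; lra). auto.
   intros n _. rewrite (rsum_telesc M (fun j => y n (tau j))). rewrite HtM, Ht0; auto. }
 rewrite E1, <- E2. apply rsum_le. intros j Hj.
 destruct (Htau j ltac:(lia)) as [Hj1 Hj2]. destruct (Htau (Datatypes.S j) ltac:(lia)) as [Hj3 Hj4].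
 rewrite HtS in *.
 destruct (P (tau j) (tau j + h) Hj1 ltac:(lra) ltac:(lra) ltac:(lra)) as [C1 C2].
 apply step; auto; lra.
Qed.

Lemma L_le t : 0 <= t <= T -> L t <= L 0.
Proof.
 intros Ht. destruct Hmw as [[H1 [H2 [H3 H4]]] H5].
 set (Y := rsum N (fun n => y n t - y n 0)).
 assert (HY : 0 <= Y).
 { apply rsum_nonneg. intros n Hn. destruct (H1 n Hn) as [_ [_ [Hm _]]]. pose proof (Hm 0 t ltac:(lra) ltac:(lra) ltac:(lra)). lra. }
 destruct (Rle_dec (L t) (L 0)) as [?|Hn]; auto. exfalso. apply Rnot_le_lt in Hn.
 set (D := L t - L 0). assert (HD : 0 < D) by (unfold D; lra).
 set (e := D / (2 * (1 + alpha) * (t + Y + 1))).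
 assert (He : 0 < e) by (apply Rdiv_lt_0_compat; [lra| apply Rmult_lt_0_compat; lra]).
 pose proof (L_bound t e (rpow e (1/alpha)) Ht He ltac:(rewrite rpow_pos by auto; apply Rpower_pos)) as B.
 rewrite rpow_inv in B by auto. fold Y in B. fold D in B.
 assert (E : (1 + alpha) * (t * e + e * Y) = D / 2 * ((t + Y) / (t + Y + 1))) by (unfold e; field; lra).
 rewrite E in B.
 assert ((t + Y) / (t + Y + 1) <= 1).
 { apply Rmult_le_reg_r with (t + Y + 1); [lra|]. unfold Rdiv. rewrite Rmult_assoc, Rinv_l; lra. }
 assert (D / 2 * ((t + Y) / (t + Y + 1)) <= D / 2 * 1) by (apply Rmult_le_compat_l; lra). lra.
Qed.
End Lyap.

Lemma pair_super a u v : 0 < a -> 0 <= u -> 0 <= v -> rpow u (1+a) + rpow v (1+a) <= rpow (u+v) (1+a).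
Proof. intros Ha Hu Hv. rewrite !rpow_p by lra.
 assert (rpow u a <= rpow (u+v) a) by (apply rpow_mono; lra).
 assert (rpow v a <= rpow (u+v) a) by (apply rpow_mono; lra).
 assert (u * rpow u a <= u * rpow (u+v) a) by (apply Rmult_le_compat_l; lra).
 assert (v * rpow v a <= v * rpow (u+v) a) by (apply Rmult_le_compat_l; lra). nra. Qed.

Lemma superadd a N x : 0 < a -> (forall n, (n < N)%nat -> 0 <= x n) ->
  rsum N (fun n => rpow (x n) (1+a)) <= rpow (rsum N x) (1+a).
Proof. intros Ha. induction N; intros H; simpl. rewrite rpow_nonpos by lra. lra.
 assert (rsum N (fun n => rpow (x n) (1 + a)) <= rpow (rsum N x) (1 + a)) by (apply IHN; intros; apply H; lia).
 pose proof (pair_super a (rsum N x) (x N) Ha ltac:(apply rsum_nonneg; intros; apply H; lia) ltac:(apply H; lia)). lra. Qed.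

Lemma rpow_rpow_inv a s : 0 < a -> 0 <= s -> rpow (rpow s (1+a)) (1/(1+a)) = s.
Proof. intros Ha Hs. destruct (Req_dec s 0) as [->|Hn]. rewrite (rpow_nonpos 0) by lra. apply rpow_nonpos; lra.
 rewrite (rpow_pos s) by lra. rewrite rpow_pos by apply Rpower_pos. rewrite Rpower_mult.
 replace ((1+a) * (1/(1+a))) with 1 by (field; lra). apply Rpower_1; lra. Qed.

Lemma jensen a N x : 0 < a -> (0 < N)%nat -> (forall n, (n < N)%nat -> 0 <= x n) ->
  rsum N x <= Rpower (INR N) (a/(1+a)) * rpow (rsum N (fun n => rpow (x n) (1+a))) (1/(1+a)).
Proof.
 intros Ha HN Hx. set (s := rsum N x). set (A := rsum N (fun n => rpow (x n) (1+a))).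
 assert (HNr : 0 < INR N) by (apply lt_0_INR; auto).
 assert (Hs : 0 <= s) by (apply rsum_nonneg; auto).
 set (m := s / INR N).
 assert (Hm : 0 <= m) by (apply Rmult_le_pos; [auto| left; apply Rinv_0_lt_compat; auto]).
 assert (HA : INR N * rpow m (1+a) <= A).
 { assert (rsum N (fun n => rpow m (1+a) + (1+a) * rpow m a * (x n - m)) <= A).
   { apply rsum_le. intros; apply tangent; auto. }
   rewrite rsum_plus, rsum_scal, rsum_minus in H.
   assert (E1 : forall c, rsum N (fun _ => c) = INR N * c). { clear. induction N; intros; simpl. ring. rewrite IHN. destruct N; simpl; ring. }
   rewrite !E1 in H. fold s in H. replace (s - INR N * m) with 0 in H by (unfold m; field; lra). lra. }
 destruct (Req_dec s 0) as [Hs0|Hs0].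
 { rewrite Hs0. apply Rmult_le_pos. left; apply Rpower_pos. apply rpow_nonneg. }
 assert (Hmp : 0 < m) by (apply Rdiv_lt_0_compat; lra).
 assert (Hp : 0 < 1/(1+a)) by (apply Rdiv_lt_0_compat; lra).
 assert (rpow (INR N * rpow m (1+a)) (1/(1+a)) <= rpow A (1/(1+a))).
 { apply rpow_mono; [lra|]. split; auto. apply Rmult_le_pos; [lra| apply rpow_nonneg]. }
 assert (E2 : rpow (INR N * rpow m (1+a)) (1/(1+a)) = Rpower (INR N) (1/(1+a)) * m).
 { rewrite (rpow_pos m) by auto. rewrite rpow_pos by (apply Rmult_lt_0_compat; auto; apply Rpower_pos).
   rewrite <- Rpower_mult_distr by (auto || apply Rpower_pos). rewrite Rpower_mult.
   replace ((1+a) * (1/(1+a))) with 1 by (field; lra). rewrite Rpower_1; auto. }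
 rewrite E2 in H.
 assert (E3 : Rpower (INR N) (a/(1+a)) * (Rpower (INR N) (1/(1+a)) * m) = s).
 { rewrite <- Rmult_assoc, <- Rpower_plus. replace (a/(1+a) + 1/(1+a)) with 1 by (field; lra).
   rewrite Rpower_1 by auto. unfold m; field; lra. }
 rewrite <- E3 at 1. apply Rmult_le_compat_l; auto. left; apply Rpower_pos.
Qed.

Theorem theorem8p2 (N K : nat) (S : nat -> nat -> R) (lam : nat -> R)
  (HK : (0 < K)%nat)
  (HS : forall k n, (k < K)%nat -> (n < N)%nat -> 0 <= S k n)
  (Hlam : in_Lambda N K S lam) :
  (forall alpha : R, 0 < alpha ->
     forall (T : R) (q y s : nat -> R -> R),
       mw_fluid_sol N K S alpha lam T q y s ->
       forall t, 0 <= t <= T ->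
         rsum N (fun n => q n t)
           <= Rpower (INR N) (alpha / (1 + alpha)) * rsum N (fun n => q n 0)) /\
  (complete_loading N K S lam ->
     forall (T : R) (q y s : nat -> R -> R),
       fluid_sol N K S lam T q y s ->
       forall t, 0 <= t <= T ->
         rsum N (fun n => q n 0) <= rsum N (fun n => q n t)).
Proof.
 split; [|apply part2; auto].
 intros alpha Ha T q y s Hmw t Ht.
 destruct N as [|N'].
 { simpl. rewrite Rmult_0_r. lra. }
 set (N := Datatypes.S N') in *.
 assert (HN : (0 < N)%nat) by (unfold N; lia).
 pose proof Hmw as [[H1 _] _].
 assert (Hq : forall tau, 0 <= tau <= T -> forall n, (n < N)%nat -> 0 <= q n tau).
 { intros tau Htau n Hn. destruct (H1 n Hn) as [_ [_ [_ Hq]]]. apply Hq; auto. }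
 pose proof (jensen alpha N (fun n => q n t) Ha HN (Hq t Ht)) as J.
 pose proof (L_le N K S lam alpha T q y s HK HS Hlam Ha Hmw t Ht) as Ll. unfold L in Ll.
 pose proof (superadd alpha N (fun n => q n 0) Ha (Hq 0 ltac:(lra))) as Sa.
 assert (H0 : 0 <= rsum N (fun n => q n 0)) by (apply rsum_nonneg; apply Hq; lra).
 assert (Hp : 0 < 1 / (1 + alpha)) by (apply Rdiv_lt_0_compat; lra).
 assert (M : rpow (rsum N (fun n => rpow (q n t) (1 + alpha))) (1 / (1 + alpha))
   <= rpow (rpow (rsum N (fun n => q n 0)) (1 + alpha)) (1 / (1 + alpha))).
 { apply rpow_mono. lra. split. apply rsum_nonneg; intros; apply rpow_nonneg. lra. }
 rewrite rpow_rpow_inv in M by auto.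
 eapply Rle_trans; [exact J|]. apply Rmult_le_compat_l; auto. left; apply Rpower_pos.
Qed.
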